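(* Assume the walk's transition probabilities $p$ are reversible, i.e. there exist $m_V:\tilde V\to(0,\infty)$ and $m_E:\tilde E\to(0,\infty)$ with $p(a)m_V(o(a))=p(\bar a)m_V(t(a))=m_E(|a|)$ for all $a\in\tilde A$. Let $\Psi_\infty$ be the stationary state, and let $\psi_\infty$ be its restriction to $A_0$. Set: - $\boldsymbol{\alpha}_{in}=[\Psi_\infty(e_1),\dots,\Psi_\infty(e_r)]^\top$; - $m(\delta G_0)=\sum_jm_E(|e_j|)$; - $\boldsymbol{m}_{\delta E}=\big[\sqrt{m_E(|e_j|)/m(\delta G_0)}\big]_{j=1}^r$. Suppose $\langle\boldsymbol{m}_{\delta E},\boldsymbol{\alpha}_{in}\rangle\neq0$, where $\langle x,y\rangle=\sum_j\overline{x_j}y_j$. Then the following are equivalent: 1. there exists $a\in A_0$ with $\psi_\infty(a)\neq0$ or $\psi_\infty(\bar a)\neq0$; 2. for every $a\in A_0$, $\psi_\infty(a)\neq0$ or $\psi_\infty(\bar a)\neq0$.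
   Context: **Symmetric directed graphs.** A symmetric directed graph $(V,A)$ has the following structure. - Each arc $a$ has an origin $o(a)$ and a terminus $t(a)$. - Each arc $a$ has an inverse arc $\bar a$ with $o(\bar a)=t(a)$, $t(\bar a)=o(a)$ and $\bar{\bar a}=a$. - $|a|=|\bar a|$ denotes the undirected edge. **The tailed graph.** - Let $G_0=(V_0,A_0)$ be a finite symmetric directed graph and let $r\ge1$. - For $j=1,\dots,r$, let $\mathbb{P}_j$ be a semi-infinite path (''tail'') with vertices $v^j_0,v^j_1,\dots$ and arcs $A(\mathbb{P}_j)$ in both directions between consecutive vertices. - The end vertex is $o(\mathbb{P}_j)=v^j_0$. We require $V(\mathbb{P}_j)\cap V_0=\{o(\mathbb{P}_j)\}$, and distinct tails share no vertices outside $V_0$. - Let $\tilde G=(\tilde V,\tilde A)=G_0\cup\bigcup_j\mathbb{P}_j$, with undirected edge set $\tilde E$. - Let $e_j$ be the arc from $v^j_1$ to $o(\mathbb{P}_j)$. **Transition probabilities.** Let $p:\tilde A\to(0,1]$ satisfy: - $\sum_{o(a)=u}p(a)=1$ for all $u$; - $p(a)=1/2$ on $\bigcup_jA(\mathbb{P}_j)\setminus\{\bar e_1,\dots,\bar e_r\}$. **Szegedy walk.** $$(U\Psi)(a)=\sum_{b:\,t(b)=o(a)}\big(2\sqrt{p(a)p(\bar b)}-\delta_{\bar a,b}\big)\Psi(b).$$ **Initial state and stationary state.** Fix $\alpha_1,\dots,\alpha_r\in\mathbb{C}$. - $\Psi_0(a)=\alpha_j$ for $a\in A(\mathbb{P}_j)$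 with $\mathrm{dist}(o(\mathbb{P}_j),t(a))<\mathrm{dist}(o(\mathbb{P}_j),o(a))$. - $\Psi_0(a)=0$ otherwise. - Set $\Psi_{n+1}=U\Psi_n$. - The pointwise limit $\Psi_\infty=\lim_n\Psi_n$ exists (known fact) and is called the stationary state. *)

(* Defs.v *)
From HB Require Import structures.
From mathcomp Require Import all_boot all_order all_algebra.
From mathcomp Require Import complex.
Set Implicit Arguments. Unset Strict Implicit. Unset Printing Implicit Defensive.
Import Order.TTheory GRing.Theory Num.Theory.
Local Open Scope ring_scope.

(* The tailed graph  G~ = G0 ∪ P_1 ∪ ... ∪ P_r.                             *)
(* Tail P_j (j : 'I_r) has vertices v^j_0 = att j ∈ V0, v^j_1, v^j_2, ...   *)
(*   Out j k : the arc v^j_k -> v^j_{k+1}   (pointing away from G0)         *)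
(*   In  j k : the arc v^j_{k+1} -> v^j_k   (pointing towards G0)           *)
(* so that e_j = In j 0 and \bar e_j = Out j 0.                             *)
(* Vertices: Vert0 v (v ∈ V0) and Tv j k = v^j_{k+1} (tail vertices off V0) *)

Inductive tarc (A0 : Type) (r : nat) : Type :=
  | Arc0 of A0
  | Out of 'I_r & nat
  | In of 'I_r & nat.
Arguments Arc0 {A0 r}.
Arguments Out {A0 r}.
Arguments In {A0 r}.

Inductive tvert (V0 : Type) (r : nat) : Type :=
  | Vert0 of V0
  | Tv of 'I_r & nat.
Arguments Vert0 {V0 r}.
Arguments Tv {V0 r}.

Definition tarc_enc (A0 : Type) r (a : tarc A0 r) : A0 + ('I_r * nat) + ('I_r * nat) :=
  match a with Arc0 b => inl (inl b) | Out j k => inl (inr (j, k)) | In j k => inr (j, k) end.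
Definition tarc_dec (A0 : Type) r (x : A0 + ('I_r * nat) + ('I_r * nat)) : tarc A0 r :=
  match x with inl (inl b) => Arc0 b | inl (inr (j, k)) => Out j k | inr (j, k) => In j k end.
Lemma tarc_encK (A0 : Type) r : cancel (@tarc_enc A0 r) (@tarc_dec A0 r).
Proof. by case. Qed.
HB.instance Definition _ (A0 : eqType) r :=
  Equality.copy (tarc A0 r) (can_type (@tarc_encK A0 r)).

Section Tailed.
Variables (V0 A0 : Type) (o0 t0 : A0 -> V0) (inv0 : A0 -> A0) (r : nat)
          (att : 'I_r -> V0).

Definition tailv (j : 'I_r) (k : nat) : tvert V0 r :=
  if k is k'.+1 then Tv j k' else Vert0 (att j).

Definition torig (a : tarc A0 r) : tvert V0 r :=
  match a with Arc0 b => Vert0 (o0 b) | Out j k => tailv j k | In j k => tailv j k.+1 end.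
Definition tterm (a : tarc A0 r) : tvert V0 r :=
  match a with Arc0 b => Vert0 (t0 b) | Out j k => tailv j k.+1 | In j k => tailv j k end.
Definition tinv (a : tarc A0 r) : tarc A0 r :=
  match a with Arc0 b => Arc0 (inv0 b) | Out j k => In j k | In j k => Out j k end.

End Tailed.

Section Sums.
Variables (V0 A0 : finType) (o0 t0 : A0 -> V0) (r : nat) (att : 'I_r -> V0).
Variable (M : nmodType).

(* \sum_{a : o(a) = u} F a   (the set of such arcs is finite) *)
Definition out_sum (u : tvert V0 r) (F : tarc A0 r -> M) : M :=
  match u with
  | Vert0 v => \sum_(b : A0 | o0 b == v) F (Arc0 b) + \sum_(j < r | att j == v) F (Out j 0)
  | Tv j k => F (Out j k.+1) + F (In j k)
  end.

(* \sum_{b : t(b) = u} F b *)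
Definition in_sum (u : tvert V0 r) (F : tarc A0 r -> M) : M :=
  match u with
  | Vert0 v => \sum_(b : A0 | t0 b == v) F (Arc0 b) + \sum_(j < r | att j == v) F (In j 0)
  | Tv j k => F (Out j k) + F (In j k.+1)
  end.
End Sums.

Section Walk.
Variables (R : rcfType) (V0 A0 : finType) (o0 t0 : A0 -> V0) (inv0 : A0 -> A0)
          (r : nat) (att : 'I_r -> V0) (p : tarc A0 r -> R).

Local Open Scope complex_scope.

Definition szegedy (Psi : tarc A0 r -> R[i]) (a : tarc A0 r) : R[i] :=
  in_sum t0 att (torig o0 att a)
    (fun b => ((2%:R * Num.sqrt (p a * p (tinv inv0 b)))%:C
               - (if tinv inv0 a == b then 1 else 0)) * Psi b).

Definition psi0 (alpha : 'I_r -> R[i]) (a : tarc A0 r) : R[i] :=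
  match a with In j _ => alpha j | _ => 0 end.

Definition psi_n (alpha : 'I_r -> R[i]) (n : nat) : tarc A0 r -> R[i] :=
  iter n szegedy (psi0 alpha).
End Walk.

Definition cvgC (R : rcfType) (u : nat -> R[i]) (l : R[i]) : Prop :=
  forall e : R, 0 < e -> exists N : nat, forall n : nat, (N <= n)%N ->
    `|u n - l| < e%:C%C.

Definition adj0 (V0 A0 : finType) (o0 t0 : A0 -> V0) : rel V0 :=
  fun u v => [exists a : A0, (o0 a == u) && (t0 a == v)].

(* Main.v *)
Require Import Defs.
From HB Require Import structures.
From mathcomp Require Import all_boot all_order all_algebra.
From mathcomp Require Import complex.
From mathcomp Require Import ring.
Import Order.TTheory GRing.Theory Num.Theory.
Local Open Scope ring_scope.

Module Helpers.
Set Implicit Arguments. Unset Strict Implicit. Unset Printing Implicit Defensive.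
Section Cvg.
Variable R : rcfType.
Local Open Scope complex_scope.

Definition cvg' (u : nat -> R[i]) (l : R[i]) : Prop :=
  forall e : R[i], 0 < e -> exists N : nat, forall n : nat, (N <= n)%N -> `|u n - l| < e.

Lemma cvgC_cvg' u l : cvgC u l -> cvg' u l.
Proof.
move=> H e he.
have : 0 < e by [].
rewrite ltcE /= => /andP[/eqP hI hR].
have -> : e = (complex.Re e)%:C by case: e hI {he hR} => a b /= ->.
by apply: H.
Qed.

Lemma cvg'_uniq u l l' : cvg' u l -> cvg' u l' -> l = l'.
Proof.
move=> H H'; apply/eqP; rewrite -subr_eq0; apply/negP => /negP hne.
have he : 0 < `|l - l'| / 2 by rewrite divr_gt0 ?normr_gt0.
have [N1 H1] := H _ he; have [N2 H2] := H' _ he.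
have h1 := H1 (maxn N1 N2) (leq_maxl _ _).
have h2 := H2 (maxn N1 N2) (leq_maxr _ _).
have : `|l - l'| < `|l - l'| / 2 + `|l - l'| / 2.
  apply: (le_lt_trans _ (ltrD h1 h2)).
  have <- : (u (maxn N1 N2) - l') - (u (maxn N1 N2) - l) = l - l' by rewrite opprB addrC addrA subrK.
  rewrite [X in _ <= X]addrC; exact: ler_normB.
by rewrite -splitr ltxx.
Qed.

Lemma cvg'_ext u v l : (forall n, u n = v n) -> cvg' u l -> cvg' v l.
Proof. move=> E H e he; have [N HN] := H e he; exists N => n hn; rewrite -E; exact: HN. Qed.

Lemma cvg'_shift u l : cvg' u l -> cvg' (fun n => u n.+1) l.
Proof. move=> H e he; have [N HN] := H e he; exists N => n hn; apply: HN; exact: leqW. Qed.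

Lemma cvg'_cst c : cvg' (fun _ => c) c.
Proof. by move=> e he; exists 0%N => n _; rewrite subrr normr0. Qed.

Lemma cvg'_add u v l m : cvg' u l -> cvg' v m -> cvg' (fun n => u n + v n) (l + m).
Proof.
move=> H H' e he.
have he2 : 0 < e / 2 by rewrite divr_gt0.
have [N1 H1] := H _ he2; have [N2 H2] := H' _ he2.
exists (maxn N1 N2) => n hn.
have h1 := H1 n (leq_trans (leq_maxl _ _) hn).
have h2 := H2 n (leq_trans (leq_maxr _ _) hn).
rewrite (splitr e); apply: (le_lt_trans _ (ltrD h1 h2)).
have -> : u n + v n - (l + m) = (u n - l) + (v n - m) by rewrite opprD addrACA.
exact: ler_normD.
Qed.

Lemma cvg'_scale k u l : cvg' u l -> cvg' (fun n => k * u n) (k * l).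
Proof.
move=> H; have [->|hk] := eqVneq k 0.
  by rewrite mul0r; apply: (cvg'_ext _ (cvg'_cst _)) => n; rewrite mul0r.
move=> e he.
have he2 : 0 < e / `|k| by rewrite divr_gt0 ?normr_gt0.
have [N HN] := H _ he2; exists N => n hn.
rewrite -mulrBr normrM.
have hk0 : 0 < `|k| by rewrite normr_gt0.
have HN' := HN n hn.
by rewrite -(ltr_pM2l hk0) [X in _ < X]mulrC divfK ?gt_eqF in HN'.
Qed.

Lemma cvg'_sum (I : Type) (s : seq I) (P : pred I) (g : I -> nat -> R[i]) (l : I -> R[i]) :
  (forall i, cvg' (g i) (l i)) ->
  cvg' (fun n => \sum_(i <- s | P i) g i n) (\sum_(i <- s | P i) l i).
Proof.
move=> H; elim: s => [|x s IH].
  by rewrite big_nil; apply: (cvg'_ext _ (cvg'_cst _)) => n; rewrite big_nil.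
rewrite big_cons; case hx: (P x).
  apply: (cvg'_ext _ (cvg'_add (H x) IH)) => n; by rewrite big_cons hx.
apply: (cvg'_ext _ IH) => n; by rewrite big_cons hx.
Qed.

End Cvg.

Section Graph.
Variables (R : rcfType) (V0 A0 : finType) (o0 t0 : A0 -> V0) (inv0 : A0 -> A0)
          (r : nat) (att : 'I_r -> V0).
Local Open Scope complex_scope.
Local Notation tarc := (tarc A0 r).
Local Notation ins := (@in_sum V0 A0 t0 r att R[i]).

Lemma eq_Arc0 (x y : A0) : (Arc0 x == Arc0 y :> tarc) = (x == y).
Proof. by apply/eqP/eqP => [[]|->]. Qed.
Lemma eq_In0 (x y : 'I_r) : (In x 0 == In y 0 :> tarc) = (x == y).
Proof. by apply/eqP/eqP => [[]|->]. Qed.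
Lemma eq_Arc0_In (x : A0) y k : (Arc0 x == In y k :> tarc) = false.
Proof. by apply/eqP. Qed.
Lemma eq_In_Arc0 (x : A0) y k : (In y k == Arc0 x :> tarc) = false.
Proof. by apply/eqP. Qed.

Lemma in_sum_ext u (F G : tarc -> R[i]) : (forall b, F b = G b) -> ins u F = ins u G.
Proof.
move=> E; case: u => [v|j k] /=; last by rewrite !E.
by congr (_ + _); apply: eq_bigr => b _; rewrite E.
Qed.

Lemma in_sumB u (F G : tarc -> R[i]) : ins u (fun b => F b - G b) = ins u F - ins u G.
Proof. by case: u => [v|j k] /=; rewrite ?sumrB opprD addrACA. Qed.

Lemma in_sumZ u k (F : tarc -> R[i]) : ins u (fun b => k * F b) = k * ins u F.
Proof. by case: u => [v|j m] /=; rewrite mulrDr ?mulr_sumr. Qed.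

Lemma in_sum_delta v (d : tarc) (Psi : tarc -> R[i]) : tterm t0 att d = Vert0 v ->
  ins (Vert0 v) (fun b => (if d == b then 1 else 0) * Psi b) = Psi d.
Proof.
case: d => [d0|j k|j [|k]] //=.
- case=> <-; rewrite (bigD1 d0) //= eqxx mul1r.
  rewrite [X in _ + X + _]big1 ?addr0; last first.
    by move=> b /andP[_ hb]; rewrite eq_Arc0 eq_sym (negbTE hb) mul0r.
  by rewrite big1 ?addr0 // => j _; rewrite ?eq_Arc0_In mul0r.
- case=> <-; rewrite big1 ?add0r; last by move=> b _; rewrite ?eq_In_Arc0 mul0r.
  rewrite (bigD1 j) //= eqxx mul1r big1 ?addr0 //.
  by move=> i /andP[_ hi]; rewrite eq_In0 eq_sym (negbTE hi) mul0r.
Qed.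

Lemma in_sum_cvg u (c : tarc -> R[i]) (X : nat -> tarc -> R[i]) (L : tarc -> R[i]) :
  (forall b, cvg' (fun n => X n b) (L b)) ->
  cvg' (fun n => ins u (fun b => c b * X n b)) (ins u (fun b => c b * L b)).
Proof.
move=> H; case: u => [v|j k] /=; apply: cvg'_add; try (apply: cvg'_sum => b);
  exact: cvg'_scale.
Qed.

Lemma tterm_tinv (Htinv : forall a, t0 (inv0 a) = o0 a) a :
  tterm t0 att (tinv inv0 a) = torig o0 att a.
Proof. by case: a => //= b; rewrite Htinv. Qed.

Definition Fv (p : tarc -> R) (Psi : tarc -> R[i]) (v : V0) : R[i] :=
  ins (Vert0 v) (fun b => (Num.sqrt (p (tinv inv0 b)))%:C * Psi b).

Lemma szeg_decomp (Htinv : forall a, t0 (inv0 a) = o0 a) p Psi a v :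
  0 <= p a -> torig o0 att a = Vert0 v ->
  szegedy o0 t0 inv0 att p Psi a =
  (2%:R * Num.sqrt (p a))%:C * Fv p Psi v - Psi (tinv inv0 a).
Proof.
move=> hp ha; rewrite /szegedy ha /Fv.
rewrite (@in_sum_ext _ (fun b => ((2%:R * Num.sqrt (p a * p (tinv inv0 b)))%:C
               - (if tinv inv0 a == b then 1 else 0)) * Psi b) (fun b => (2%:R * Num.sqrt (p a))%:C *
   ((Num.sqrt (p (tinv inv0 b)))%:C * Psi b) - (if tinv inv0 a == b then 1 else 0) * Psi b)).
  have hd : tterm t0 att (tinv inv0 a) = Vert0 v by rewrite tterm_tinv.
  by rewrite in_sumB in_sumZ (in_sum_delta _ hd).
by move=> b; rewrite mulrBl sqrtrM // mulrA rmorphM mulrA.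
Qed.

Lemma sum_partition (I : finType) (g : I -> V0) (f : V0 -> I -> R[i]) :
  \sum_v \sum_(b | g b == v) f v b = \sum_b f (g b) b.
Proof.
rewrite [RHS](partition_big g xpredT) //; apply: eq_bigr => v _.
by apply: eq_big => [b|b /eqP ->] //.
Qed.

End Graph.

End Helpers.
Import Helpers.

Theorem proposition5p1
  (R : rcfType) (V0 A0 : finType) (o0 t0 : A0 -> V0) (inv0 : A0 -> A0)
  (Hinv : forall a, inv0 (inv0 a) = a)
  (Hoinv : forall a, o0 (inv0 a) = t0 a)
  (Htinv : forall a, t0 (inv0 a) = o0 a)
  (Hconn : forall u v : V0, connect (adj0 o0 t0) u v)
  (HA0 : (0 < #|A0|)%N)
  (r : nat) (Hr : (1 <= r)%N) (att : 'I_r -> V0)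
  (p : tarc A0 r -> R)
  (Hp : forall a, 0 < p a <= 1)
  (Hpsum : forall u : tvert V0 r, out_sum o0 att u p = 1)
  (HpIn : forall (j : 'I_r) (k : nat), p (In j k) = 2%:R^-1)
  (HpOut : forall (j : 'I_r) (k : nat), p (Out j k.+1) = 2%:R^-1)
  (mV : tvert V0 r -> R) (mE : tarc A0 r -> R)
  (HmV : forall u, 0 < mV u)
  (HmE : forall a, 0 < mE a)
  (HmEinv : forall a, mE (tinv inv0 a) = mE a)
  (Hrev : forall a, p a * mV (torig o0 att a) = mE a /\
                    p (tinv inv0 a) * mV (tterm t0 att a) = mE a)
  (alpha : 'I_r -> R[i]) (Psi_inf : tarc A0 r -> R[i])
  (Hlim : forall a, cvgC (fun n => psi_n o0 t0 inv0 att p alpha n a) (Psi_inf a))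
  (Horth : let m_dG0 := \sum_(j < r) mE (In j 0) in
           \sum_(j < r) ((Num.sqrt (mE (In j 0) / m_dG0))%:C)^*%C * Psi_inf (In j 0)
           != 0) :
  (exists a : A0, Psi_inf (Arc0 a) != 0 \/ Psi_inf (Arc0 (inv0 a)) != 0) <->
  (forall a : A0, Psi_inf (Arc0 a) != 0 \/ Psi_inf (Arc0 (inv0 a)) != 0).
Proof.
have Hl a := cvgC_cvg' (Hlim a).
have Hfix a : Psi_inf a = szegedy o0 t0 inv0 att p Psi_inf a.
  apply: (cvg'_uniq (cvg'_shift (Hl a))).
  exact (in_sum_cvg t0 att (torig o0 att a)
    (fun b => ((2%:R * Num.sqrt (p a * p (tinv inv0 b)))%:C
               - (if tinv inv0 a == b then 1 else 0))%C)
    (fun b => Hl b)).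
have hp0 a : 0 <= p a by case/andP: (Hp a) => /ltW.
have hmV0 u : 0 <= mV u by apply/ltW.
have hmE0 a : 0 <= mE a by apply/ltW.
set G := fun v => (Fv t0 inv0 att p Psi_inf v * ((Num.sqrt (mV (Vert0 v)))^-1)%:C)%C.
have hG a v : torig o0 att a = Vert0 v ->
    Psi_inf a + Psi_inf (tinv inv0 a) = ((2%:R * Num.sqrt (mE a))%:C * G v)%C.
  move=> ha.
  have -> : Psi_inf a + Psi_inf (tinv inv0 a) =
      ((2%:R * Num.sqrt (p a))%:C * Fv t0 inv0 att p Psi_inf v)%C.
    by rewrite {1}Hfix (szeg_decomp Htinv Psi_inf (hp0 a) ha) subrK.
  have hpa : p a = mE a / mV (Vert0 v).
    by rewrite -(Hrev a).1 ha mulfK // gt_eqF.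
  rewrite hpa sqrtrM // sqrtrV // /G !rmorphM /=; ring.
have hc a : ((2%:R * Num.sqrt (mE a))%:C)%C != 0 :> R[i].
  rewrite (fmorph_eq0 (real_complex R)) mulf_eq0 negb_or pnatr_eq0 /=.
  by rewrite sqrtr_eq0 -ltNge.
have Gpair b : G (o0 b) = G (t0 b).
  have e1 := hG (Arc0 b) (o0 b) erefl.
  have := hG (Arc0 (inv0 b)) (t0 b); rewrite /= Hoinv => /(_ erefl) e2.
  have hm := HmEinv (Arc0 b); rewrite /= in hm.
  rewrite /= Hinv hm addrC e1 in e2.
  exact: (mulfI (hc (Arc0 b)) e2).
have Hc x y : connect (adj0 o0 t0) x y -> G x = G y.
  move/connectP=> [s]; elim: s x => [|z s IH] x /=; first by move=> _ ->.
  move=> /andP[hxz hs] hy; rewrite -(IH z hs hy).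
  move: hxz; rewrite /adj0 => /existsP[a /andP[/eqP <- /eqP <-]].
  exact: Gpair.
have H2 : forall b : A0, Psi_inf (Arc0 b) != 0 \/ Psi_inf (Arc0 (inv0 b)) != 0.
  move=> b0.
  case: (eqVneq (Psi_inf (Arc0 b0)) 0) => h1; last by left.
  case: (eqVneq (Psi_inf (Arc0 (inv0 b0))) 0) => h2; last by right.
  exfalso.
  have G0 : G (o0 b0) = 0.
    have e1 := hG (Arc0 b0) (o0 b0) erefl.
    rewrite /= h1 h2 addr0 in e1.
    by apply: (mulfI (hc (Arc0 b0))); rewrite mulr0 -e1.
  have GV v : G v = 0 by rewrite -(Hc _ _ (Hconn (o0 b0) v)).
  have FV v : Fv t0 inv0 att p Psi_inf v = 0.
    have := GV v; rewrite /G => /eqP; rewrite mulf_eq0 => /orP[/eqP //|].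
    rewrite (fmorph_eq0 (real_complex R)) invr_eq0 sqrtr_eq0 => h.
    by have := HmV (Vert0 v); rewrite ltNge h.
  have hsum : \sum_v (((Num.sqrt (mV (Vert0 v)))%:C)%C * Fv t0 inv0 att p Psi_inf v) = 0.
    by apply: big1 => v _; rewrite FV mulr0.
  have E1 : \sum_(b : A0) ((Num.sqrt (mE (Arc0 b)))%:C)%C * Psi_inf (Arc0 b) =
      \sum_v \sum_(b | t0 b == v) ((Num.sqrt (mE (Arc0 b)))%:C)%C * Psi_inf (Arc0 b).
    by rewrite sum_partition.
  have E2 : \sum_(j < r) ((Num.sqrt (mE (In j 0)))%:C)%C * Psi_inf (In j 0) =
      \sum_v \sum_(j | att j == v) ((Num.sqrt (mE (In j 0)))%:C)%C * Psi_inf (In j 0).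
    by rewrite sum_partition.
  have E : \sum_(b : A0) ((Num.sqrt (mE (Arc0 b)))%:C)%C * Psi_inf (Arc0 b) +
           \sum_(j < r) ((Num.sqrt (mE (In j 0)))%:C)%C * Psi_inf (In j 0) = 0.
    rewrite E1 E2 -big_split /=; apply: (etrans _ hsum); apply: eq_bigr => v _.
    rewrite /Fv /= mulrDr !mulr_sumr; congr (_ + _); apply: eq_bigr => b /eqP <-.
      rewrite mulrA -rmorphM -sqrtrM // [mV _ * _]mulrC.
      by have := (Hrev (Arc0 b)).2; rewrite /= => ->.
    rewrite mulrA -rmorphM -sqrtrM // [mV _ * _]mulrC.
    by have := (Hrev (In b 0)).2; rewrite /= => ->.
  have hanti b : Psi_inf (Arc0 (inv0 b)) = - Psi_inf (Arc0 b).
    have := hG (Arc0 b) (o0 b) erefl; rewrite GV mulr0 /= => /eqP.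
    by rewrite addr_eq0 => /eqP ->; rewrite opprK.
  have hS : \sum_(b : A0) ((Num.sqrt (mE (Arc0 b)))%:C)%C * Psi_inf (Arc0 b) = 0.
    set S := (X in X = 0).
    have : S = - S.
      rewrite {1}/S (reindex_inj (can_inj Hinv)) /S -sumrN; apply: eq_bigr => b _.
      have hm := HmEinv (Arc0 b); rewrite /= in hm.
      by rewrite hanti hm mulrN.
    move/eqP; rewrite -addr_eq0 -mulr2n mulrn_eq0 /= => /eqP //.
  rewrite hS add0r in E.
  move: Horth; rewrite /=.
  set m := \sum_(j < r) mE (In j 0).
  have -> : \sum_(j < r) ((Num.sqrt (mE (In j 0) / m))%:C)%C^*%C * Psi_inf (In j 0) =
     ((Num.sqrt m^-1)%:C)%C * \sum_(j < r) ((Num.sqrt (mE (In j 0)))%:C)%C * Psi_inf (In j 0).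
    rewrite mulr_sumr; apply: eq_bigr => j _.
    rewrite conjc_real sqrtrM // rmorphM; ring.
  by rewrite E mulr0 eqxx.
split=> [_|H]; first exact: H2.
have /card_gt0P [b _] := HA0.
by exists b; apply: H.
Qed.
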